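(* Let $G$ be a locally compact group with Haar measure $\nu$. For every open symmetric relatively compact neighborhood $V$ of the identity and every compact set $B\subseteq G$ there exist a regular compact set $C'$ and finitely many elements $g_1,\dots,g_n\in G$ such that: the interior of $C'$ is $V$-connected; $\nu(\partial C')=0$; $B\subseteq\bigcup_{i=1}^n g_iC'$; and $g_iC'V\cap g_jC'V=\emptyset$ for $i\neq j$.
   Context: A compact set is regular if it equals the closure of its interior. A set $S\subseteq G$ is $V$-disconnected if there is $A\subseteq S$ with $A\neq\emptyset$, $A\neq S$ and $AV\cap S=A$; otherwise $S$ is $V$-connected. $\partial C'$ is the topological boundary. *)

(* Defs.v *)
From HB Require Import structures.
From mathcomp Require Import all_boot all_order all_algebra.
From mathcomp Require Import all_classical all_reals all_analysis.
Set Implicit Arguments. Unset Strict Implicit. Unset Printing Implicit Defensive.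
Import Order.TTheory GRing.Theory Num.Theory.
Local Open Scope classical_set_scope.
Local Open Scope ring_scope.

Definition group_axioms {G : Type} (mul : G -> G -> G) (inv : G -> G) (e : G) :=
  [/\ (forall x y z, mul x (mul y z) = mul (mul x y) z),
      (forall x, mul e x = x), (forall x, mul x e = x),
      (forall x, mul (inv x) x = e) & (forall x, mul x (inv x) = e)].

Definition locally_compact_group {G : ptopologicalType}
  (mul : G -> G -> G) (inv : G -> G) (e : G) :=
  [/\ group_axioms mul inv e,
      continuous (fun p : G * G => mul p.1 p.2),
      continuous inv,
      hausdorff_space G & locally_compact [set: G]].

Definition borel_type (G : ptopologicalType) := g_sigma_algebraType (@open G).

Definition ltrans {G : Type} (mul : G -> G -> G) (g : G) (A : set G) : set G :=
  [set mul g a | a in A].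
Definition setmul {G : Type} (mul : G -> G -> G) (A B : set G) : set G :=
  [set mul a b | a in A & b in B].

Definition haar_measure {G : ptopologicalType} (mul : G -> G -> G)
  (R : realType) (nu : {measure set (borel_type G) -> \bar R}) :=
  [/\ (forall (g : G) (A : set G), measurable (A : set (borel_type G)) ->
          nu (ltrans mul g A : set (borel_type G)) = nu A),
      (forall K : set G, compact K -> (nu K < +oo)%E),
      (exists U : set G, open U /\ (0 < nu U)%E),
      (forall A : set G, measurable (A : set (borel_type G)) ->
          nu A = ereal_inf [set nu U | U in [set U : set G | open U /\ A `<=` U]]) &
      (forall U : set G, open U ->
          nu U = ereal_sup [set nu K | K in [set K : set G | compact K /\ K `<=` U]])].

Definition regular_compact {G : topologicalType} (C : set G) :=
  compact C /\ C = closure (C°).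

Definition V_disconnected {G : Type} (mul : G -> G -> G) (V S : set G) :=
  exists A : set G, [/\ A `<=` S, A <> set0, A <> S & setmul mul A V `&` S = A].
Definition V_connected {G : Type} (mul : G -> G -> G) (V S : set G) :=
  ~ V_disconnected mul V S.

Definition boundary {G : topologicalType} (C : set G) := closure C `\` C°.

(* Main.v *)
Require Import Defs.
From HB Require Import structures.
From mathcomp Require Import all_boot all_order all_algebra.
From mathcomp Require Import all_classical all_reals all_analysis.
From mathcomp Require Import finmap.
Set Implicit Arguments. Unset Strict Implicit. Unset Printing Implicit Defensive.
Import Order.TTheory GRing.Theory Num.Theory.
Import numFieldNormedType.Exports.
Local Open Scope classical_set_scope.
Local Open Scope ring_scope.

Lemma sum_lb (R : realType) (s : seq R) (c : R) (f : R -> \bar R) :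
  (forall a, a \in s -> (c%:E <= f a)%E) ->
  (((size s)%:R * c)%:E <= \sum_(a <- s) f a)%E.
Proof.
elim: s => [|a s IH] h; first by rewrite big_nil mul0r.
rewrite big_cons /= -addn1 natrD mulrDl mul1r EFinD addeC.
apply: leeD; first by apply: h; rewrite inE eqxx.
by apply: IH => b bs; apply: h; rewrite inE bs orbT.
Qed.

Lemma itv01_uncountable (R : realType) : ~ countable (`]0, 1[%classic : set R).
Proof.
move=> /(@countable_lebesgue_measure0 R).
by rewrite lebesgue_measure_itv /= lte01 oppr0 adde0 => /eqP; rewrite onee_eq0.
Qed.

Lemma null_member (d : measure_display) (T : measurableType d) (R : realType)
  (mu : {measure set T -> \bar R}) (F : R -> set T) (M : set T) :
  measurable M -> (mu M < +oo)%E -> (forall t, measurable (F t)) ->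
  (forall t, F t `<=` M) ->
  (forall s t, s <> t -> F s `&` F t = set0) ->
  exists t, 0 < t < 1 /\ mu (F t) = 0%E.
Proof.
move=> mM muM mF FM Fdisj.
apply: contrapT => H.
have pos t : 0 < t < 1 -> (0 < mu (F t))%E.
  move=> t01; rewrite lt0e measure_ge0 andbT; apply/eqP => h.
  by apply: H; exists t.
pose S m := [set t : R | 0 < t < 1 /\ ((m.+1%:R)^-1%:E < mu (F t))%E].
have cov : (`]0, 1[%classic : set R) `<=` \bigcup_(m in [set: nat]) S m.
  move=> t; rewrite set_itvoo /= => t01.
  have := pos _ t01; case Et : (mu (F t)) => [r| |] //.
    rewrite lte_fin => r0.
    exists (Num.trunc r^-1) => //; split => //; rewrite Et lte_fin.
    rewrite -[ltRHS]invrK ltf_pV2 ?posrE ?invr_gt0 ?ltr0n //.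
    exact: truncnS_gt.
  by move=> _; exists 0%N => //; split => //; rewrite Et ltey.
have [m infm] : exists m, infinite_set (S m).
  apply: contrapT => hn.
  apply: (@itv01_uncountable R); apply: sub_countable (subset_card_le cov) _.
  apply: bigcup_countable; first exact: countableP.
  move=> i _; apply: finite_set_countable.
  by apply: contrapT => hi; apply: hn; exists i.
have muMf : mu M \is a fin_num by rewrite ge0_fin_numE ?measure_ge0.
have fM := fineK muMf; set r := fine (mu M) in fM.
have [Bf BS kB] := infinite_set_fset ((Num.trunc r).+1 * m.+1)%N infm.
have triv : trivIset ([set` Bf] : set R) F.
  move=> i j _ _ [x [Fi Fj]]; apply: contrapT => ij.
  by have := Fdisj _ _ ij; rewrite -subset0 => /(_ x); apply.
have sumeq := measure_fin_bigcup mu (finite_fset Bf) triv (fun i _ => mF i).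
rewrite -fsbig_seq ?fset_uniq // in sumeq.
have le1 : (mu (\bigcup_(t in [set` Bf]) F t) <= mu M)%E.
  apply: le_measure.
  - by apply/mem_set; apply: fin_bigcup_measurable => //; exact: finite_fset.
  - exact/mem_set.
  by move=> x [t _ Ftx]; exact: FM Ftx.
have lb := @sum_lb R Bf (m.+1%:R^-1) (fun t => mu (F t)).
have : (((size Bf)%:R * m.+1%:R^-1)%:E <= mu M)%E.
  apply: le_trans le1; rewrite sumeq; apply: lb => a aB.
  by apply/ltW; have [] := BS a aB.
rewrite -fM lee_fin => hle.
have : (Num.trunc r).+1%:R <= r.
  apply: le_trans hle.
  rewrite ler_pdivlMr ?ltr0n // -natrM ler_nat.
  exact: kB.
by rewrite leNgt truncnS_gt.
Qed.

Section Grp.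
Variables (G : ptopologicalType) (mul : G -> G -> G) (inv : G -> G) (e : G).
Hypothesis HG : locally_compact_group mul inv e.

Let Hax : group_axioms mul inv e. Proof. by case: HG. Qed.
Lemma gA x y z : mul x (mul y z) = mul (mul x y) z. Proof. by case: Hax. Qed.
Lemma g1x x : mul e x = x. Proof. by case: Hax. Qed.
Lemma gx1 x : mul x e = x. Proof. by case: Hax. Qed.
Lemma gVx x : mul (inv x) x = e. Proof. by case: Hax. Qed.
Lemma gxV x : mul x (inv x) = e. Proof. by case: Hax. Qed.
Lemma gKl x y : mul (inv x) (mul x y) = y. Proof. by rewrite gA gVx g1x. Qed.
Lemma gKr x y : mul x (mul (inv x) y) = y. Proof. by rewrite gA gxV g1x. Qed.
Lemma gKl' x y : mul (mul y x) (inv x) = y. Proof. by rewrite -gA gxV gx1. Qed.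
Lemma ginvM x y : inv (mul x y) = mul (inv y) (inv x).
Proof.
have h : mul (mul x y) (mul (inv y) (inv x)) = e.
  by rewrite -gA gKr gxV.
by rewrite -[LHS]gx1 -h gA gVx g1x.
Qed.
Lemma ginvK x : inv (inv x) = x.
Proof. by rewrite -[LHS]gx1 -(gVx x) gA gVx g1x. Qed.

Lemma gmul_cont : continuous (fun p : G * G => mul p.1 p.2). Proof. by case: HG. Qed.
Lemma ghaus : hausdorff_space G. Proof. by case: HG. Qed.
Lemma glc : locally_compact [set: G]. Proof. by case: HG. Qed.

Lemma lmul_cont g : continuous (mul g).
Proof.
move=> x.
have -> : mul g = (fun p : G * G => mul p.1 p.2) \o (fun y => (g, y)) by [].
apply: continuous_comp; last exact: gmul_cont.
apply: cvg_pair => /=; [exact: cvg_cst | exact: cvg_id].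
Qed.

Lemma ltransE g A : ltrans mul g A = mul (inv g) @^-1` A.
Proof.
apply/seteqP; split => x /=.
  by case=> a Aa <-; rewrite gKl.
by move=> h; exists (mul (inv g) x) => //; rewrite gKr.
Qed.

Lemma open_ltrans g A : open A -> open (ltrans mul g A).
Proof. by move=> oA; rewrite ltransE; apply: open_comp => // x _; apply: lmul_cont. Qed.

Lemma setmul_bigcup A U : setmul mul A U = \bigcup_(a in A) ltrans mul a U.
Proof.
apply/seteqP; split => x.
  by case=> a Aa [u Uu <-]; exists a => //; exists u.
by case=> a Aa [u Uu <-]; exists a => //; exists u.
Qed.

Lemma open_setmul A U : open U -> open (setmul mul A U).
Proof. by move=> oU; rewrite setmul_bigcup; apply: bigcup_open => a _; exact: open_ltrans. Qed.


Lemma ginv1 : inv e = e. Proof. by rewrite -[LHS]gx1 gVx. Qed.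

Lemma setmulP (A U : set G) x : setmul mul A U x <-> exists a u, [/\ A a, U u & mul a u = x].
Proof.
split; first by case=> a Aa [u Uu <-]; exists a, u.
by case=> a [u [Aa Uu <-]]; exists a => //; exists u.
Qed.

Lemma setmul_sub (A A' U U' : set G) : A `<=` A' -> U `<=` U' -> setmul mul A U `<=` setmul mul A' U'.
Proof. by move=> hA hU x /setmulP [a [u [Aa Uu <-]]]; apply/setmulP; exists a, u; split; auto. Qed.

Lemma compact_setmul (A U : set G) : compact A -> compact U -> compact (setmul mul A U).
Proof.
move=> cA cU.
have -> : setmul mul A U = (fun p : G * G => mul p.1 p.2) @` (A `*` U).
  apply/seteqP; split => x.
    by move/setmulP => [a [u [Aa Uu <-]]]; exists (a, u).
  by case=> [[a u] [/= Aa Uu] <-]; apply/setmulP; exists a, u.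
apply: continuous_compact; last exact: compact_setX.
apply: continuous_subspaceT; exact: gmul_cont.
Qed.

Lemma closed_compact (A : set G) : compact A -> closed A.
Proof. by move=> cA; apply: compact_closed => //; exact: ghaus. Qed.

Lemma closure_min (A E : set G) : closed E -> A `<=` E -> closure A `<=` E.
Proof. by move=> cE AE; rewrite (closure_id E).1 //; exact: closureS. Qed.

Lemma closure_setmul_sub (A U : set G) : compact (closure A) -> compact (closure U) ->
  closure (setmul mul A U) `<=` setmul mul (closure A) (closure U).
Proof.
move=> cA cU; apply: closure_min.
  by apply: closed_compact; exact: compact_setmul.
by apply: setmul_sub; exact: subset_closure.
Qed.

Variable V : set G.
Hypotheses (HVo : open V) (HVe : V e) (HVsym : forall x, V x -> V (inv x))
  (HVrc : compact (closure V)).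

Lemma closure_subV (A : set G) : closure A `<=` setmul mul A V.
Proof.
move=> x clx.
have nb : nbhs x (ltrans mul x V).
  apply: open_nbhs_nbhs; split; first exact: open_ltrans.
  by exists e => //; rewrite gx1.
have [y [Ay [v Vv yE]]] := clx _ nb.
apply/setmulP; exists y, (inv v); split => //; first exact: HVsym.
by rewrite -yE gKl'.
Qed.

Fixpoint Pk (k : nat) : set G :=
  if k is k'.+1 then setmul mul (Pk k') V else [set e].

Lemma PkS k : Pk k `<=` Pk k.+1.
Proof. by move=> x Px /=; apply/setmulP; exists x, e; split => //; rewrite gx1. Qed.

Lemma Pk_mono m n : (m <= n)%N -> Pk m `<=` Pk n.
Proof.
move=> mn; rewrite -(subnKC mn); elim: (n - m)%N => [|d IH]; first by rewrite addn0.
by rewrite addnS; apply: subset_trans IH (@PkS _).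
Qed.

Lemma Pk_e k : Pk k e.
Proof. by apply: (@Pk_mono 0) => //. Qed.

Lemma Pk_mul a b x y : Pk a x -> Pk b y -> Pk (a + b) (mul x y).
Proof.
move=> Px; elim: b y => [|b IH] y /=.
  by move=> ->; rewrite gx1 addn0.
move/setmulP => [y' [v [Py' Vv <-]]]; rewrite addnS /=; apply/setmulP.
by exists (mul x y'), v; split => //; [exact: IH | rewrite gA].
Qed.

Lemma Pk1 v : V v -> Pk 1 v.
Proof. by move=> Vv; apply/setmulP; exists e, v; split => //; rewrite g1x. Qed.

Lemma Pk_inv k x : Pk k x -> Pk k (inv x).
Proof.
elim: k x => [|k IH] x /=; first by move=> ->; exact: ginv1.
move/setmulP => [x' [v [Px' Vv <-]]]; rewrite ginvM.
exact: (@Pk_mul 1 k _ _ (Pk1 (HVsym Vv)) (IH _ Px')).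
Qed.

Lemma open_Pk k : open (Pk k.+1).
Proof. exact: open_setmul. Qed.

Lemma compact_clPk k : compact (closure (Pk k)).
Proof.
elim: k => [|k IH] /=.
  have c1 : compact [set e] := @compact_set1 G e.
  by rewrite -(closure_id [set e]).1 //; exact: closed_compact.
apply: (subclosed_compact _ (compact_setmul IH HVrc)); first exact: closed_closure.
exact: closure_setmul_sub.
Qed.


Lemma closure_near (A : set G) x : closure A x ->
  exists a v, [/\ A a, V v & a = mul x v].
Proof.
move=> clx.
have nb : nbhs x (ltrans mul x V).
  apply: open_nbhs_nbhs; split; first exact: open_ltrans.
  by exists e => //; rewrite gx1.
by have [y [Ay [v Vv yE]]] := clx _ nb; exists y, v; split.
Qed.

(* cosets of the subgroup generated by V *)
Definition Hs x := exists k, Pk k x.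
Definition grel x y := Hs (mul (inv x) y).

Lemma grel_refl x : grel x x.
Proof. by exists 0%N; rewrite /= gVx. Qed.

Lemma grel_sym x y : grel x y -> grel y x.
Proof. by case=> k Pk_; exists k; have := Pk_inv Pk_; rewrite ginvM ginvK. Qed.

Lemma grel_trans x y z : grel x y -> grel y z -> grel x z.
Proof.
case=> a Pa [b Pb]; exists (a + b)%N; have := Pk_mul Pa Pb.
by rewrite -gA gKr.
Qed.

Definition rep x := get [set y | grel x y].

Lemma rep_rel x : grel x (rep x).
Proof. by apply: (@getPex _ [set y | grel x y]); exists x; exact: grel_refl. Qed.

Lemma rep_eq x y : grel x y -> rep x = rep y.
Proof.
move=> xy; rewrite /rep; congr get; apply/seteqP; split => z /=.
  by apply: grel_trans; exact: grel_sym.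
exact: grel_trans.
Qed.


Variable R : realType.

Let crs : completely_regular_space G :=
  @locally_compact_completely_regular G R glc ghaus.

Let usep : uniform_separator [set e] (~` V).
Proof. by apply: crs; [exact: open_closedC | move=> h; exact: h HVe]. Qed.

Definition fU : G -> R := @Urysohn G R [set e] (~` V).

Lemma fU_cont : continuous fU. Proof. exact: Urysohn_continuous. Qed.

Lemma fU_e : fU e = 0.
Proof. by apply: (@Urysohn_sub0 G R _ _ usep); exists e. Qed.

Lemma fU_nV x : ~ V x -> fU x = 1.
Proof. by move=> nVx; apply: (@Urysohn_sub1 G R _ _ usep); exists x. Qed.

Definition Wlt (t : R) := [set x | fU x < t].
Definition Wle (t : R) := [set x | fU x <= t].

Lemma open_Wlt t : open (Wlt t).
Proof.
have -> : Wlt t = fU @^-1` [set r | r < t] by [].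
by apply: open_comp; [move=> x _; exact: fU_cont | exact: open_lt].
Qed.

Lemma closed_Wle t : closed (Wle t).
Proof.
have -> : Wle t = fU @^-1` [set r | r <= t] by [].
by apply: preimage_closed; [move=> x _; exact: fU_cont | exact: closed_le].
Qed.

Lemma Wle_V t : t < 1 -> Wle t `<=` V.
Proof.
move=> t1 x; rewrite /Wle /= => fx; apply: contrapT => nVx.
by move: fx; rewrite fU_nV // leNgt t1.
Qed.

Lemma Wlt_Wle t : Wlt t `<=` Wle t.
Proof. by move=> x /= /ltW. Qed.

Lemma compact_Wle t : t < 1 -> compact (Wle t).
Proof.
move=> t1; have sub : Wle t `<=` closure V.
  by apply: subset_trans (Wle_V t1) _; exact: subset_closure.
exact: (subclosed_compact (@closed_Wle t) HVrc sub).
Qed.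

Lemma Wlt_e t : 0 < t -> Wlt t e.
Proof. by rewrite /Wlt /= fU_e. Qed.

Lemma Wle_Wlt s t : s < t -> Wle s `<=` Wlt t.
Proof. by move=> st x /= h; apply: le_lt_trans h st. Qed.

Variable N : nat.

Definition Kc := closure (Pk N).
Definition Dt t := setmul mul Kc (Wlt t).
Definition Ct t := closure (Dt t).

Lemma compact_Kc : compact Kc. Proof. exact: compact_clPk. Qed.

Lemma open_Dt t : open (Dt t). Proof. exact/open_setmul/open_Wlt. Qed.

Lemma Kc_Dt t : 0 < t -> Kc `<=` Dt t.
Proof. by move=> t0 k Kk; apply/setmulP; exists k, e; split => //; [exact: Wlt_e | rewrite gx1]. Qed.

Lemma Ct_sub t : t < 1 -> Ct t `<=` setmul mul Kc (Wle t).
Proof.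
move=> t1; apply: closure_min.
  by apply: closed_compact; apply: compact_setmul compact_Kc (compact_Wle t1).
by apply: setmul_sub => //; exact: Wlt_Wle.
Qed.

Lemma Ct_Dt s t : s < t -> t < 1 -> Ct s `<=` Dt t.
Proof.
move=> st t1; apply: subset_trans (Ct_sub (lt_trans st t1)) _.
by apply: setmul_sub => //; exact: Wle_Wlt.
Qed.

Lemma compact_Ct t : t < 1 -> compact (Ct t).
Proof.
move=> t1; have cM := compact_setmul compact_Kc (compact_Wle t1).
exact: (subclosed_compact (@closed_closure _ _) cM (Ct_sub t1)).
Qed.

Lemma Ct_M t : t < 1 -> Ct t `<=` setmul mul Kc (closure V).
Proof.
move=> t1; apply: subset_trans (Ct_sub t1) _; apply: setmul_sub => //.
by apply: subset_trans (Wle_V t1) _; exact: subset_closure.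
Qed.

Lemma compact_M : compact (setmul mul Kc (closure V)).
Proof. exact: compact_setmul compact_Kc HVrc. Qed.

Lemma Ct_Pk t : t < 1 -> Ct t `<=` Pk N.+2.
Proof.
move=> t1; apply: subset_trans (Ct_sub t1) _; rewrite /=; apply: setmul_sub.
  exact: closure_subV.
exact: Wle_V.
Qed.

Lemma Pk_Ct t : 0 < t -> Pk N `<=` Ct t.
Proof.
move=> t0; apply: subset_trans (@subset_closure _ _) _.
by apply: subset_trans (Kc_Dt t0) _; exact: subset_closure.
Qed.

Lemma Dt_int t : Dt t `<=` (Ct t)°.
Proof. by rewrite -open_subsetE; [exact: subset_closure | exact: open_Dt]. Qed.

Lemma regular_Ct t : Ct t = closure ((Ct t)°).
Proof.
apply/seteqP; split.
  by apply: closureS; exact: Dt_int.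
apply: closure_min; first exact: closed_closure.
exact: interior_subset.
Qed.

Lemma closure_Ct t : closure (Ct t) = Ct t.
Proof. by rewrite -(closure_id _).1 //; exact: closed_closure. Qed.

Lemma boundary_Ct t : boundary (Ct t) `<=` Ct t `\` Dt t.
Proof.
move=> x [clx nix]; split; first by rewrite -closure_Ct.
by move=> Dx; apply: nix; exact: Dt_int.
Qed.

Lemma boundary_disj s t : 0 < s -> s < t -> t < 1 ->
  boundary (Ct s) `&` boundary (Ct t) = set0.
Proof.
move=> s0 st t1; apply/seteqP; split => // x [/boundary_Ct [Cs _] /boundary_Ct [_ nD]].
by apply: nD; exact: Ct_Dt Cs.
Qed.


Lemma Vconn_Ct t : 0 < t -> t < 1 -> V_connected mul V ((Ct t)°).
Proof.
move=> t0 t1 [A [AS A0 AnS AVS]].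
set S := (Ct t)° in AS AnS AVS.
have adj x y v : S x -> S y -> V v -> y = mul x v -> (A x <-> A y).
  move=> Sx Sy Vv yE; split => Ax.
    by rewrite -AVS; split => //; apply/setmulP; exists x, v.
  rewrite -AVS; split => //; apply/setmulP; exists y, (inv v); split => //.
    exact: HVsym.
  by rewrite yE gKl'.
have DS : Dt t `<=` S by exact: Dt_int.
have KS : Kc `<=` S by apply: subset_trans DS; exact: Kc_Dt.
have PS : Pk N `<=` S by apply: subset_trans KS; exact: subset_closure.
have chain j : (j <= N)%N -> forall p, Pk j p -> (A p <-> A e).
  elim: j => [|j IH] jN p /=; first by move=> ->.
  move/setmulP => [p' [v [Pp' Vv pE]]].
  have Sp' : S p' by apply: PS; apply: Pk_mono Pp'; exact: ltnW.
  have Sp : S p by apply: PS; apply: (Pk_mono jN); apply/setmulP; exists p', v.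
  rewrite -(IH (ltnW jN) _ Pp'); symmetry; exact: adj Sp' Sp Vv (esym pE).
have all x : S x -> (A x <-> A e).
  move=> Sx.
  have clx : closure (Dt t) x by apply: interior_subset.
  have [y [v [Dy Vv yE]]] := closure_near clx.
  rewrite (adj _ _ _ Sx (DS _ Dy) Vv yE).
  move/setmulP : (Dy) => [k [w [Kk Ww yE']]].
  have Ww' : V w by apply: Wle_V t1 _ (Wlt_Wle Ww).
  rewrite -(adj _ _ _ (KS _ Kk) (DS _ Dy) Ww' (esym yE')).
  have [p [v' [Pp Vv' pE]]] := closure_near Kk.
  rewrite (adj _ _ _ (KS _ Kk) (PS _ Pp) Vv' pE).
  exact: chain Pp.
apply: AnS; apply/seteqP; split => // x Sx.
have [a Aa] : A !=set0 by apply/set0P/eqP.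
by apply/(all _ Sx); apply/(all _ (AS _ Aa)).
Qed.

End Grp.

Lemma closed_borel (G : ptopologicalType) (A : set G) :
  closed A -> measurable (A : set (borel_type G)).
Proof.
move=> cA; rewrite -(setCK A); apply: measurableC.
by apply: sub_sigma_algebra; rewrite /= -closedC setCK.
Qed.

Lemma closed_boundary (G : ptopologicalType) (A : set G) : closed (boundary A).
Proof.
rewrite /boundary setDE; apply: closedI; first exact: closed_closure.
exact/open_closedC/open_interior.
Qed.

Theorem lemma10 (R : realType) (G : ptopologicalType)
  (mul : G -> G -> G) (inv : G -> G) (e : G)
  (HG : locally_compact_group mul inv e)
  (nu : {measure set (borel_type G) -> \bar R}) (Hnu : haar_measure mul nu)
  (V : set G) (HVo : open V) (HVe : V e) (HVsym : forall x, V x -> V (inv x))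
  (HVrc : compact (closure V))
  (B : set G) (HB : compact B) :
  exists (C' : set G) (n : nat) (g : nat -> G),
    [/\ regular_compact C',
        V_connected mul V (C'°),
        nu (boundary C' : set (borel_type G)) = 0%E,
        B `<=` \bigcup_(i in `I_n) ltrans mul (g i) C' &
        (forall i j, (i < n)%N -> (j < n)%N -> i <> j ->
           setmul mul (ltrans mul (g i) C') V `&`
           setmul mul (ltrans mul (g j) C') V = set0)].
Proof.
set rp := rep mul inv e V.
pose f := fun p : G * nat => ltrans mul (rp p.1) (Pk mul e V p.2.+1).
have fo : forall p, [set: G * nat] p -> open (f p).
  by move=> p _; exact: (open_ltrans HG _ (open_Pk HG HVo _)).
have Bcov : B `<=` cover [set: G * nat] f.
  move=> b Bb.
  have [k Pkk] := grel_sym HG HVsym (rep_rel HG V b).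
  exists (b, k) => //=; exists (mul (inv (rp b)) b).
    exact: (Pk_mono HG HVe (leqnSn k)).
  exact: gKr HG _ _.
rewrite compact_cover in HB.
have [D' _ BD'] := HB _ _ _ fo Bcov.
pose s := undup [seq rp p.1 | p <- D'].
pose N := (\max_(p <- D') p.2.+1)%N.
pose Mset := setmul mul (Kc mul e V N) (closure V).
pose F := fun t : R => if (0 < t < 1) then boundary (Ct mul e V N t) else set0.
have cM : compact Mset := @compact_M _ _ _ _ HG _ HVrc N.
have mM : measurable (Mset : set (borel_type G)).
  by apply: closed_borel; apply: compact_closed cM; exact: ghaus HG.
have muM : (nu Mset < +oo)%E by case: Hnu => _ hc _ _ _; exact: hc.
have mF t : measurable (F t : set (borel_type G)).
  rewrite /F; case: ifP => _; last exact: measurable0.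
  by apply: closed_borel; exact: closed_boundary.
have FM t : F t `<=` Mset.
  rewrite /F; case: ifP => [/andP[t0 t1]|_]; last exact: sub0set.
  move=> x /(boundary_Ct HG) [Cx _].
  exact: (Ct_M HG HVo HVe HVrc t1 Cx).
have Fdisj s1 t : s1 <> t -> F s1 `&` F t = set0.
  move=> st; rewrite /F.
  case: ifP => [/andP[s0 s1']|_]; last exact: set0I.
  case: ifP => [/andP[t0 t1]|_]; last exact: setI0.
  have [lt|gt|eq] := ltgtP s1 t; last by [].
    exact: (@boundary_disj _ _ _ _ HG _ HVo HVe HVrc R N s1 t s0 lt t1).
  by rewrite setIC; exact: (@boundary_disj _ _ _ _ HG _ HVo HVe HVrc R N t s1 t0 gt s1').
have [t [t01 Ft0]] := null_member mM muM mF FM Fdisj.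
have Ft : F t = boundary (Ct mul e V N t) by rewrite /F t01.
move/andP: t01 => [t0 t1].
exists (Ct mul e V N t), (size s), (fun i => nth e s i); split.
- split; first exact: (compact_Ct HG HVo HVe HVrc t1).
  have h := regular_Ct HG V N t. exact: h.
- exact (Vconn_Ct HG HVo HVe HVsym t0 t1).
- by rewrite -Ft.
- move=> b /BD' [p D'p [y Py yb]].
  have ps : rp p.1 \in s by rewrite mem_undup; apply: map_f.
  exists (index (rp p.1) s); first by rewrite /= index_mem.
  rewrite nth_index //; exists y => //.
  apply: (Pk_Ct HG HVo HVe t0); apply: (Pk_mono HG HVe _ Py).
  by apply: (@leq_bigmax_seq _ _ xpredT (fun p : G * nat => p.2.+1)).
- move=> i j il jl ij; apply/seteqP; split => // x [xi xj].
  have key g : setmul mul (ltrans mul g (Ct mul e V N t)) V x ->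
      exists a, Pk mul e V N.+3 a /\ x = mul g a.
    move/setmulP => [y [u [[c Cc yE] Vu xE]]].
    exists (mul c u); split.
      have Pc := Ct_Pk HG HVo HVe HVsym HVrc t1 Cc.
      by have := Pk_mul HG Pc (Pk1 HG Vu); rewrite addn1.
    by rewrite -xE -yE (gA HG).
  have [a [Pa xa]] := key _ xi.
  have [b [Pb xb]] := key _ xj.
  have E : mul (inv (nth e s i)) (nth e s j) = mul a (inv b).
    rewrite -[nth e s j](gKl' HG b) -xb xa -(gA HG) (gKl HG) //.
  have rij : grel mul inv e V (nth e s i) (nth e s j).
    by exists (N.+3 + N.+3)%N; rewrite E; exact (Pk_mul HG Pa (Pk_inv HG HVsym Pb)).
  have : nth e s i \in s by exact: mem_nth.
  rewrite mem_undup => /mapP [q1 _ q1E].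
  have : nth e s j \in s by exact: mem_nth.
  rewrite mem_undup => /mapP [q2 _ q2E].
  have r12 : grel mul inv e V q1.1 q2.1.
    have R1 : grel mul inv e V (rp q1.1) (rp q2.1) by rewrite -q1E -q2E.
    exact (grel_trans HG (grel_trans HG (rep_rel HG V q1.1) R1)
      (grel_sym HG HVsym (rep_rel HG V q2.1))).
  have := rep_eq HG HVsym r12; rewrite -/rp -q1E -q2E => Eij.
  have := nth_uniq e il jl (undup_uniq _); rewrite -/s Eij eqxx.
  by move=> /esym/eqP.
Qed.
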